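(* Let $\mathbb{F}$ be a finite field and $X\subset\mathbb{F}$. Given a decision tree $T$ for $X$, there is a pruned polynomial decision tree $T'$ deciding the same membership with $|T'|\leq 4|T|$.
   Context: A computation tree over $\mathbb{F}$ is a rooted binary tree; the root takes the input $x\in\mathbb{F}$; each computation node $\nu$ computes a value $u_\nu$ by an arithmetic operation (a constant, multiplication by a constant, $+$, $-$, $\times$, or $/$) on values computed at earlier nodes; each decision node tests an equality $u_\mu=u_\lambda$ between previously computed values and has two outgoing edges labeled ''$=$'' and ''$\neq$''. A decision tree for $X$ is a computation tree with leaves labeled ''$\in$''/''$\notin$'' such that input $x$ reaches a leaf labeled ''$\in$'' iff $x\in X$. $|T|$ is the length of the longest path through $T$. For $x\in\mathbb{F}$, $\mathbf{p}_x$ is the path $T$ takes on input $x$. $T$ is pruned if (1) for every decision node $\nu$ there are inputs $x,y$ such that $\mathbf{p}_x,\mathbf{p}_y$ both pass through $\nu$ but take different forks there, and (2) every computation node has at least one decision node as a descendant. $T$ is polynomial if no computation node performs division. *)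

(* Defs.v *)
From HB Require Import structures.
From mathcomp Require Import all_boot all_order all_algebra.
Set Implicit Arguments. Unset Strict Implicit. Unset Printing Implicit Defensive.
Import GRing.Theory.
Local Open Scope ring_scope.

Section CTree.
Variable F : fieldType.

(* Computed values along a path are stored in a sequence env; index 0 is the
   input x (the value of the root); index k > 0 is the value computed at the
   k-th computation node on the path from the root. *)
Inductive op : Type :=
  | OConst of F
  | OScale of F & nat
  | OAdd of nat & nat
  | OSub of nat & nat
  | OMul of nat & nat
  | ODiv of nat & nat.

Inductive ctree : Type :=
  | Leaf of bool                        (* true = "in", false = "not in" *)
  | Comp of op & ctree
  | Test of nat & nat & ctree & ctree.  (* decision u_i = u_j; "=" child, "<>" child *)

Definition op_wf (o : op) (n : nat) : Prop :=
  match o with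
  | OConst _ => True
  | OScale _ i => (i < n)%N
  | OAdd i j | OSub i j | OMul i j | ODiv i j => (i < n)%N /\ (j < n)%N
  end.

Fixpoint tree_wf (t : ctree) (n : nat) : Prop :=
  match t with
  | Leaf _ => True
  | Comp o t' => op_wf o n /\ tree_wf t' n.+1
  | Test i j l r => [/\ (i < n)%N, (j < n)%N, tree_wf l n & tree_wf r n]
  end.

Definition val (env : seq F) (i : nat) : F := nth 0 env i.

Definition eval_op (o : op) (env : seq F) : F :=
  match o with
  | OConst c => c
  | OScale c i => c * val env i
  | OAdd i j => val env i + val env j
  | OSub i j => val env i - val env j
  | OMul i j => val env i * val env j
  | ODiv i j => val env i / val env j
  end.

Definition op_safe (o : op) (env : seq F) : Prop :=
  match o with
  | ODiv _ j => val env j != 0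
  | _ => True
  end.

Fixpoint out (t : ctree) (env : seq F) : bool :=
  match t with
  | Leaf b => b
  | Comp o t' => out t' (rcons env (eval_op o env))
  | Test i j l r => if val env i == val env j then out l env else out r env
  end.

(* no division by zero along the path actually taken *)
Fixpoint safe (t : ctree) (env : seq F) : Prop :=
  match t with
  | Leaf _ => True
  | Comp o t' => op_safe o env /\ safe t' (rcons env (eval_op o env))
  | Test i j l r => if val env i == val env j then safe l env else safe r env
  end.

(* |T| : length (number of edges) of the longest root-to-leaf path *)
Fixpoint depth (t : ctree) : nat :=
  match t with
  | Leaf _ => 0
  | Comp _ t' => (depth t').+1
  | Test _ _ l r => (maxn (depth l) (depth r)).+1
  end.

Definition decides (X : pred F) (t : ctree) : Prop :=
  [/\ tree_wf t 1,
      forall x : F, safe t [:: x]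
    & forall x : F, out t [:: x] = X x].

Fixpoint has_decision (t : ctree) : bool :=
  match t with
  | Leaf _ => false
  | Comp _ t' => has_decision t'
  | Test _ _ _ _ => true
  end.

(* A : inputs whose path reaches the current node; env x : values computed
   on input x along the path up to the current node. *)
Fixpoint pruned_rec (t : ctree) (A : F -> Prop) (env : F -> seq F) : Prop :=
  match t with
  | Leaf _ => True
  | Comp o t' =>
      has_decision t' /\
      pruned_rec t' A (fun x => rcons (env x) (eval_op o (env x)))
  | Test i j l r =>
      [/\ exists x y, [/\ A x, A y, val (env x) i = val (env x) j
                          & val (env y) i <> val (env y) j],
          pruned_rec l (fun x => A x /\ val (env x) i = val (env x) j) env
        & pruned_rec r (fun x => A x /\ val (env x) i <> val (env x) j) env]
  end.

Definition pruned (t : ctree) : Prop :=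
  pruned_rec t (fun _ => True) (fun x => [:: x]).

(* "polynomial" tree: no computation node performs division *)
Fixpoint division_free (t : ctree) : Prop :=
  match t with
  | Leaf _ => True
  | Comp (ODiv _ _) _ => False
  | Comp _ t' => division_free t'
  | Test _ _ l r => division_free l /\ division_free r
  end.

End CTree.

(* Main.v *)
Require Import Defs.
From mathcomp Require Import all_boot all_order all_algebra.
From mathcomp Require Import zify ring.
From Stdlib Require Import Classical.
Set Implicit Arguments. Unset Strict Implicit. Unset Printing Implicit Defensive.
Import GRing.Theory.
Local Open Scope ring_scope.

Arguments OConst {F}. Arguments OScale {F}. Arguments OAdd {F}. Arguments OSub {F}.
Arguments OMul {F}. Arguments ODiv {F}. Arguments Leaf {F}.
Notation vl := Defs.val.
Arguments Defs.val : simpl never.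

Section S.
Variable F : fieldType.

Definition mulo (a : nat) (d : option nat) (m : nat) : seq (op F) * nat :=
  if d is Some b then ([:: OMul a b], m) else ([::], a).
Definition muld (di dj : option nat) (m : nat) : seq (op F) * option nat :=
  match di, dj with
  | None, _ => ([::], dj)
  | Some a, None => ([::], di)
  | Some a, Some b => ([:: OMul a b], Some m)
  end.

Definition gen (o : op F) (R : seq (nat * option nat)) (m : nat)
  : seq (op F) * (nat * option nat) :=
  match o with
  | OConst c => ([:: OConst c], (m, None))
  | OScale c i => let: (p, d) := nth (0%N, None) R i in ([:: OScale c p], (m, d))
  | OMul i j =>
      let: (pi, di) := nth (0%N, None) R i in
      let: (pj, dj) := nth (0%N, None) R j in
      let: (s, d) := muld di dj m.+1 in (OMul pi pj :: s, (m, d))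
  | ODiv i j =>
      let: (pi, di) := nth (0%N, None) R i in
      let: (pj, dj) := nth (0%N, None) R j in
      let: (s1, a) := mulo pi dj m in
      let: (s2, d) := muld di (Some pj) (m + size s1) in (s1 ++ s2, (a, d))
  | OAdd i j =>
      let: (pi, di) := nth (0%N, None) R i in
      let: (pj, dj) := nth (0%N, None) R j in
      let: (s1, a) := mulo pi dj m in
      let: (s2, b) := mulo pj di (m + size s1) in
      let m2 := (m + size s1 + size s2)%N in
      let: (s3, d) := muld di dj m2.+1 in (s1 ++ s2 ++ OAdd a b :: s3, (m2, d))
  | OSub i j =>
      let: (pi, di) := nth (0%N, None) R i in
      let: (pj, dj) := nth (0%N, None) R j in
      let: (s1, a) := mulo pi dj m in
      let: (s2, b) := mulo pj di (m + size s1) in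
      let m2 := (m + size s1 + size s2)%N in
      let: (s3, d) := muld di dj m2.+1 in (s1 ++ s2 ++ OSub a b :: s3, (m2, d))
  end.

Fixpoint compile (t : ctree F) (m : nat) (R : seq (nat * option nat)) : ctree F :=
  match t with
  | Leaf b => Leaf b
  | Comp o t' => let: (s, r) := gen o R m in
                 foldr (@Comp F) (compile t' (m + size s) (rcons R r)) s
  | Test i j l r =>
      let: (pi, di) := nth (0%N, None) R i in
      let: (pj, dj) := nth (0%N, None) R j in
      let: (s1, a) := mulo pi dj m in
      let: (s2, b) := mulo pj di (m + size s1) in
      foldr (@Comp F) (Test a b (compile l (m + size s1 + size s2) R)
                                (compile r (m + size s1 + size s2) R)) (s1 ++ s2)
  end.

Definition exec (N : seq F) (s : seq (op F)) :=
  foldl (fun N o => rcons N (eval_op o N)) N s.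

Fixpoint ops_wf (s : seq (op F)) (m : nat) : Prop :=
  if s is o :: s' then op_wf o m /\ ops_wf s' m.+1 else True.

Definition nodiv (o : op F) : bool := if o is ODiv _ _ then false else true.

Lemma out_foldr s t N : out (foldr (@Comp F) t s) N = out t (exec N s).
Proof. by elim: s N => //= o s IH N; rewrite IH. Qed.

Lemma depth_foldr s t : depth (foldr (@Comp F) t s) = (size s + depth t)%N.
Proof. by elim: s => //= o s ->. Qed.

Lemma wf_foldr s t m : ops_wf s m -> tree_wf t (m + size s) -> tree_wf (foldr (@Comp F) t s) m.
Proof.
elim: s m => /= [|o s IH] m; first by rewrite addn0.
by move=> [H1 H2] H3; split => //; apply: IH => //; rewrite addSnnS.
Qed.

Lemma df_foldr s t : all nodiv s -> division_free t -> division_free (foldr (@Comp F) t s).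
Proof. elim: s => //= o s IH /andP[]; case: o => //= *; exact: IH. Qed.

Lemma exec_ext N s : exists w, exec N s = N ++ w.
Proof.
elim: s N => /= [|o s IH] N; first by exists [::]; rewrite cats0.
have [w ->] := IH (rcons N (eval_op o N)). by exists (eval_op o N :: w); rewrite -cats1 -catA.
Qed.

Lemma size_exec N s : size (exec N s) = (size N + size s)%N.
Proof. by elim: s N => /= [|o s IH] N; rewrite ?addn0 // IH size_rcons addSnnS. Qed.

Lemma gen_size o R m : (size (gen o R m).1 <= 4)%N.
Proof.
case: o => /=.
- by [].
- by move=> c i; case: nth.
all: move=> i j; case: nth => pi [di|]; case: nth => pj [dj|] //=.
Qed.

Lemma gen_nodiv o R m : all nodiv (gen o R m).1.
Proof.
case: o => /=.
- by [].
- by move=> c i; case: nth.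
all: move=> i j; case: nth => pi [di|]; case: nth => pj [dj|] //=.
Qed.

Definition dv (N : seq F) (d : option nat) : F := if d is Some q then vl N q else 1.
Definition rep_wf m (r : nat * option nat) : Prop :=
  (r.1 < m)%N /\ (if r.2 is Some q then (q < m)%N else True).
Definition inv (R : seq (nat * option nat)) (E N : seq F) : Prop :=
  forall k, (k < size R)%N ->
  [/\ rep_wf (size N) (nth (0%N, None) R k), dv N (nth (0%N, None) R k).2 != 0
    & vl E k = vl N (nth (0%N, None) R k).1 / dv N (nth (0%N, None) R k).2].

Lemma gen_wf o R m : op_wf o (size R) ->
  (forall k, (k < size R)%N -> rep_wf m (nth (0%N, None) R k)) ->
  ops_wf (gen o R m).1 m /\ rep_wf (m + size (gen o R m).1) (gen o R m).2.
Proof.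
rewrite /rep_wf.
case: o => /= [c|c i|i j|i j|i j|i j] Ho H.
- split => //; lia.
- move: (H i Ho); case: nth => pi [di|] /= [? ?]; repeat split; lia.
all: case: Ho => Hi Hj; move: (H i Hi) (H j Hj);
  case: nth => pi [di|]; case: nth => pj [dj|] /= [? ?] [? ?]; repeat split; lia.
Qed.

Lemma vl_rcons (N : seq F) x k :
  vl (rcons N x) k = if (k < size N)%N then vl N k else if k == size N then x else 0.
Proof. by rewrite /Defs.val nth_rcons. Qed.

Ltac solve_ifs :=
  rewrite ?vl_rcons ?size_rcons;
  repeat match goal with |- context [if ?c then _ else _] =>
    first [ rewrite (_ : c = true); last by lia
          | rewrite (_ : c = false); last by lia ] end.

Lemma gen_sem o R E N : size E = size R -> op_wf o (size R) -> op_safe o E -> inv R E N ->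
  dv (exec N (gen o R (size N)).1) (gen o R (size N)).2.2 != 0 /\
  vl (exec N (gen o R (size N)).1) (gen o R (size N)).2.1 /
     dv (exec N (gen o R (size N)).1) (gen o R (size N)).2.2 = eval_op o E.
Proof.
move=> HE.
case: o => /= [c|c i|i j|i j|i j|i j] Ho Hs H.
{ rewrite /exec /dv /=; solve_ifs; split; [exact: oner_neq0 | by rewrite divr1]. }
{ move: (H i Ho); case: nth => pi [di|] /= [[A1 B1] Di ->]; simpl in A1, B1;
  rewrite /exec /dv /=; solve_ifs.
  - split => //; field => //.
  - split; [exact: oner_neq0 | by rewrite !divr1]. }
all: case: Ho => Hi Hj; move: (H i Hi) (H j Hj);
  case: nth => pi [di|]; case: nth => pj [dj|] /= [[A1 B1] Di Ei] [[A2 B2] Dj Ej];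
  simpl in A1, A2, B1, B2;
  move: Hs; rewrite ?Ei ?Ej => Hs; rewrite /exec /dv /=; solve_ifs.
all: try (have Pj : vl N pj != 0 by move: Hs; apply: contra => /eqP ->; rewrite mul0r).
all: split.
all: try (by rewrite mulf_neq0); try done; try exact: oner_neq0.
all: field.
all: by rewrite ?oner_neq0 ?Di ?Dj ?Pj.
Qed.

Lemma rep_wf_mono m m' r : rep_wf m r -> (m <= m')%N -> rep_wf m' r.
Proof. case: r => p [q|] [/= ? ?] ?; split => //=; lia. Qed.

Lemma tree_wf_eq (t : ctree F) M K : tree_wf t M -> K = M -> tree_wf t K.
Proof. by move=> H ->. Qed.

Lemma compile_wf t : forall R m, tree_wf t (size R) ->
  (forall k, (k < size R)%N -> rep_wf m (nth (0%N, None) R k)) ->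
  tree_wf (compile t m R) m.
Proof.
elim: t => [b|o t IH|i j l IHl r IHr] R m //=.
- move=> [Ho Ht] HR.
  have := @gen_wf o R m Ho HR; case: gen => [s rr] /= [Hs Hr].
  apply: wf_foldr => //; apply: IH; first by rewrite size_rcons.
  move=> k; rewrite size_rcons ltnS leq_eqVlt nth_rcons => /orP[/eqP ->|Hk].
  + by rewrite ltnn eqxx.
  + by rewrite Hk; apply: rep_wf_mono (HR k Hk) _; lia.
- move=> [Hi Hj Hl Hr] HR.
  move: (HR i Hi) (HR j Hj).
  case: nth => pi [di|]; case: nth => pj [dj|] [/= A1 B1] [/= A2 B2];
  rewrite /=; (repeat split; try lia).
  all: match goal with |- tree_wf (compile _ ?M _) ?K => apply: (@tree_wf_eq _ M); last by lia end.
  all: (apply: IHl || apply: IHr); [done | move=> k Hk; apply: rep_wf_mono (HR k Hk) _; lia].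
Qed.

Lemma compile_df t : forall R m, division_free (compile t m R).
Proof.
elim: t => [b|o t IH|i j l IHl r IHr] R m //=.
- have := gen_nodiv o R m; case: gen => [s rr] /= Hs.
  exact: df_foldr.
- case: nth => pi [di|]; case: nth => pj [dj|]; apply: df_foldr => //=.
Qed.

Lemma compile_depth t : forall R m, (depth (compile t m R) <= 4 * depth t)%N.
Proof.
elim: t => [b|o t IH|i j l IHl r IHr] R m //=.
- have := gen_size o R m; case: gen => [s rr] /= Hs.
  rewrite depth_foldr; have := IH (rcons R rr) (m + size s)%N; lia.
- have := IHl R; have := IHr R.
  case: nth => pi [di|]; case: nth => pj [dj|]; rewrite depth_foldr /= => H1 H2.
  all: have := H1 (m + 1 + 1)%N; have := H2 (m + 1 + 1)%N.
  all: have := H1 (m + 1 + 0)%N; have := H2 (m + 1 + 0)%N.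
  all: have := H1 (m + 0 + 1)%N; have := H2 (m + 0 + 1)%N.
  all: have := H1 (m + 0 + 0)%N; have := H2 (m + 0 + 0)%N.
  all: lia.
Qed.


Lemma vl_cat (N w : seq F) k : (k < size N)%N -> vl (N ++ w) k = vl N k.
Proof. by move=> Hk; rewrite /Defs.val nth_cat Hk. Qed.

Lemma inv_rcons1 R E N x : inv R E N -> inv R E (rcons N x).
Proof.
move=> H k Hk; have [] := H k Hk; rewrite /rep_wf /dv size_rcons.
case: nth => p [q|] /= [A B] D V; rewrite !vl_rcons ?A ?B //; split => //; lia.
Qed.

Lemma inv_exec R E N s : inv R E N -> inv R E (exec N s).
Proof.
elim: s N => //= o s IH N H; apply: IH; exact: inv_rcons1.
Qed.

Lemma inv_add R E N r v : inv R E N -> size E = size R -> rep_wf (size N) r ->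
  dv N r.2 != 0 -> vl N r.1 / dv N r.2 = v -> inv (rcons R r) (rcons E v) N.
Proof.
move=> H HE W D V k; rewrite size_rcons ltnS leq_eqVlt => /orP[/eqP ->|Hk].
- by rewrite nth_rcons ltnn eqxx vl_rcons HE ltnn eqxx.
- by rewrite nth_rcons Hk vl_rcons HE Hk; apply: H.
Qed.

Lemma compile_ok t : forall R E N m, m = size N -> tree_wf t (size R) ->
  size E = size R -> inv R E N -> safe t E -> out (compile t m R) N = out t E.
Proof.
elim: t => [b|o t IH|i j l IHl r IHr] R E N m -> //=.
- move=> [Ho Ht] HE HI [Hos Hs].
  have HR : forall k, (k < size R)%N -> rep_wf (size N) (nth (0%N, None) R k).
    by move=> k Hk; have [] := HI k Hk.
  have Hg := gen_sem HE Ho Hos HI. have Hw := @gen_wf o R (size N) Ho HR.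
  move: Hg Hw; case: gen => [s rr] /= [D V] [_ W].
  rewrite out_foldr; apply: IH => //.
  + by rewrite size_exec.
  + by rewrite size_rcons.
  + by rewrite !size_rcons HE.
  + apply: inv_add => //; [exact: inv_exec | by rewrite size_exec].
- move=> [Hi Hj Hl Hr] HE HI Hs.
  move: (HI i Hi) (HI j Hj).
  case: nth => pi [di|]; case: nth => pj [dj|] /= [[A1 B1] Di Ei] [[A2 B2] Dj Ej];
  simpl in A1, A2, B1, B2.
  all: rewrite ?out_foldr /=.
  all: rewrite Ei Ej in Hs *; solve_ifs.
  all: rewrite eqr_div ?oner_neq0 // ?mulr1 in Hs *.
  all: move: Hs; case: ifP => Hc Hs.
  all: (apply: IHl || apply: IHr) => //.
  all: first [ by rewrite ?size_exec ?size_rcons /=; lia | exact: inv_exec | by repeat apply: inv_rcons1 ].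
Qed.


Fixpoint leafval (t : ctree F) : bool :=
  match t with Leaf b => b | Comp _ t => leafval t | Test _ _ l _ => leafval l end.

Lemma nodec_out (t : ctree F) (env : seq F) : has_decision t = false -> out t env = leafval t.
Proof. by elim: t env => //= o t IH env H; rewrite IH. Qed.

Lemma pruned_rec_ext (t : ctree F) : forall (A B : F -> Prop) env, (forall x, A x <-> B x) ->
  pruned_rec t A env -> pruned_rec t B env.
Proof.
elim: t => [b|o t IH|i j l IHl r IHr] A B env AB //=.
- by move=> [H1 H2]; split => //; apply: IH H2.
- move=> [[x [y [Ax Ay Ex Ey]]] Pl Pr]; split.
  + by exists x, y; split => //; apply/AB.
  + by apply: IHl Pl => z; split => -[Az Ez]; split => //; apply/AB.
  + by apply: IHr Pr => z; split => -[Az Ez]; split => //; apply/AB.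
Qed.

Lemma df_safe (t : ctree F) (env : seq F) : division_free t -> safe t env.
Proof.
elim: t env => [b|o t IH|i j l IHl r IHr] env //=.
- by case: o => //= *; split => //; apply: IH.
- by move=> [Dl Dr]; case: ifP => _; [apply: IHl | apply: IHr].
Qed.

Lemma df_comp o (t : ctree F) : nodiv o -> division_free t -> division_free (Comp o t).
Proof. by case: o. Qed.

Lemma prune_ex (t : ctree F) : forall n (A : F -> Prop) env, tree_wf t n -> division_free t ->
  exists t', [/\ tree_wf t' n, division_free t', (depth t' <= depth t)%N,
                 pruned_rec t' A env & forall x, A x -> out t' (env x) = out t (env x)].
Proof.
elim: t => [b|o t IH|i j l IHl r IHr] n A env /=.
- by move=> _ _; exists (Leaf b).
- move=> [Ho Ht] Hdf.
  have [Hnd Hdf1] : nodiv o /\ division_free t by move: Hdf; clear -o; case: o => //= *; split.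
  have [t1 [W D Dp P O]] := IH n.+1 A (fun x => rcons (env x) (eval_op o (env x))) Ht Hdf1.
  case Hd: (has_decision t1).
  { exists (Comp o t1); split; [by split | exact: df_comp | by rewrite /= ltnS
      | by split | by move=> x Ax /=; apply: O]. }
  { exists (Leaf (leafval t1)); split => // x Ax /=.
    by rewrite -O // nodec_out. }
- move=> [Hi Hj Hl Hr] [Dl Dr].
  have [l1 [Wl DDl Dpl Pl Ol]] :=
    IHl n (fun x => A x /\ vl (env x) i = vl (env x) j) env Hl Dl.
  have [r1 [Wr DDr Dpr Pr Or]] :=
    IHr n (fun x => A x /\ vl (env x) i <> vl (env x) j) env Hr Dr.
  case: (classic (exists x y, [/\ A x, A y, vl (env x) i = vl (env x) j
                                  & vl (env y) i <> vl (env y) j])) => [Hex|Hnex].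
  { exists (Test i j l1 r1); split; [by split | by split | by rewrite /=; lia | by split | ].
    move=> x Ax /=; case: eqP => e; [apply: Ol | apply: Or]; by split. }
  case: (classic (exists x, A x /\ vl (env x) i = vl (env x) j)) => [[x0 [Ax0 E0]]|Hno].
  { have Hall : forall y, A y -> vl (env y) i = vl (env y) j.
      by move=> y Ay; apply: NNPP => Hne; apply: Hnex; exists x0, y.
    exists l1; split; [done | done | lia | | ].
    - by apply: pruned_rec_ext Pl => x; split => [[]|Ax] //; split => //; apply: Hall.
    - by move=> x Ax /=; rewrite (Hall x Ax) eqxx; apply: Ol; split => //; apply: Hall. }
  { have Hall : forall y, A y -> vl (env y) i <> vl (env y) j.
      by move=> y Ay e; apply: Hno; exists y.
    exists r1; split; [done | done | lia | | ].
    - by apply: pruned_rec_ext Pr => x; split => [[]|Ax] //; split => //; apply: Hall.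
    - move=> x Ax /=; case: eqP => e; first by case: (Hall x Ax).
      by apply: Or; split => //; apply: Hall. }
Qed.

End S.

Theorem lemma2 (F : finFieldType) (X : {set F}) (T : ctree F) :
  decides (fun x => x \in X) T ->
  exists T' : ctree F,
    [/\ decides (fun x => x \in X) T', pruned T', division_free T'
      & (depth T' <= 4 * depth T)%N].
Proof.
move=> [Wt St Ot].
pose T1 := compile T 1 [:: (0%N, None)].
have W1 : tree_wf T1 1.
  apply: compile_wf => // k; rewrite ltnS leqn0 => /eqP ->; by split.
have I1 : forall x : F, inv [:: (0%N, None)] [:: x] [:: x].
  move=> x k; rewrite ltnS leqn0 => /eqP -> /=; split => //; first exact: oner_neq0.
  by rewrite /dv divr1.
have O1 : forall x : F, out T1 [:: x] = out T [:: x].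
  by move=> x; apply: compile_ok => //; apply: St.
have [T2 [W2 D2 Dp2 P2 O2]] := prune_ex (fun _ => True) (fun x => [:: x]) W1 (compile_df _ _ _).
exists T2; split => //.
- split => // [x|x]; first exact: df_safe.
  by rewrite O2 // O1 Ot.
- apply: leq_trans Dp2 _; exact: compile_depth.
Qed.
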